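(* Let $\phi\in\Phi$, $\nu>0$, $p\in[1,\infty]$, $\mathcal{J}=\{J_1,\dots,J_m\}$ a partition of $\{1,\dots,n\}$, $f:\mathbb{R}^n\to(-\infty,+\infty]$ proper lsc, $\Omega\subseteq\mathbb{R}^n$ closed, and suppose $\min_{x\in\Omega}\{\nu f(x)+\|G_{\mathcal{J},p}(x)\|_0\}$ has a nonempty global optimal solution set with optimal value $\varpi^*$. Suppose $f$ is Lipschitz relative to $\Omega$ with constant $L_f>0$ (w.r.t. the Euclidean norm) and that $x^\varrho\in\Omega$ for every $x\in\Omega$ and $\varrho>0$. Let $\beta=\max\big(1,\max_{1\le i\le m}|J_i|^{\frac{p-2}{2p}}\big)$ (exponent $1/2$ when $p=\infty$) and $\bar\varrho=\frac{\phi'_-(1)(1-t^* )\beta\nu L_f}{1-t_0}$. Then: (i) for all $x\in\Omega$, $w\in[0,e]$: $\nu f(x)+\sum_{i=1}^m\phi(w_i)+\bar\varrho\langle e-w,G_{\mathcal{J},p}(x)\rangle\ge\varpi^*$, and $\varpi^*$ is the optimal value of the MPEC $$\textstyle (Q)\ \min_{x,w}\{\nu f(x)+\sum_{i=1}^m\phi(w_i):\ \langle e-w,G_{\mathcal{J},p}(x)\rangle=0,\ 0\le w\le e,\ x\in\Omega\};$$ (ii) for every $\varrho>\bar\varrho$, the set of global optimal solutions of $\min_{x,w}\{\nu f(x)+\sum_{i=1}^m\phi(w_i)+\varrho\langle e-w,G_{\mathcal{J},p}(x)\rangle:\ x\in\Omega,\ 0\le w\le e\}$ coincides with that of $(Q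)$.
   Context: $\Phi$ is the family of proper lsc functions $\phi:\mathbb{R}\to(-\infty,+\infty]$ with $\mathrm{int}(\mathrm{dom}\,\phi)\supseteq[0,1]$, convex on $[0,1]$, such that $\min_{t\in[0,1]}\phi(t)=0$ is attained at a (fixed) point $t^*\in[0,1)$, and $\phi(1)=1$; $\phi'_-(1)$ is the left derivative at $1$. $\psi(t)=\phi(t)$ on $[0,1]$, $+\infty$ otherwise; $t_0\in[0,1)$ is a point with $\frac{1}{1-t^*}\in\partial\psi(t_0)$ (convex subdifferential; such a point exists by Lemma A.1). $G_{\mathcal{J},p}(x):=(\|x_{J_1}\|_p,\dots,\|x_{J_m}\|_p)^T$; $\|v\|_0$ counts nonzero entries; $e$ is the all-ones vector. For $x\in\mathbb{R}^n$ and $\varrho>0$, $x^\varrho\in\mathbb{R}^n$ is obtained from $x$ by setting $x_j=0$ for all $j\in J_i$ with $\varrho\|x_{J_i}\|_p\le\phi'_-(1)$, and keeping all other entries. *)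

(* Defs.v *)
From Stdlib Require Import Reals Lra List.
Import ListNotations.
Open Scope R_scope.

(** Extended reals (-oo excluded): [None] stands for +oo. *)
Definition ER := option R.

Definition eadd (a b : ER) : ER :=
  match a, b with Some x, Some y => Some (x + y) | _, _ => None end.
Definition escal (c : R) (a : ER) : ER := option_map (Rmult c) a.
Definition egt (a : ER) (c : R) : Prop :=
  match a with None => True | Some x => c < x end.
Definition ege (a : ER) (c : R) : Prop :=
  match a with None => True | Some x => c <= x end.
Definition ele (a b : ER) : Prop :=
  match a, b with
  | Some x, Some y => x <= y
  | _, None => True
  | None, Some _ => False
  end.
(** real part (value on the effective domain; arbitrary 0 at +oo) *)
Definition rpart (a : ER) : R := match a with Some x => x | None => 0 end.

Definition rsum (k : nat) (F : nat -> R) : R :=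
  fold_right (fun i acc => F i + acc) 0 (seq 0 k).
Definition esum (k : nat) (F : nat -> ER) : ER :=
  fold_right (fun i acc => eadd (F i) acc) (Some 0) (seq 0 k).

(** R^n, represented as functions nat -> R vanishing from index n on
    (coordinates 1..n of the paper are indices 0..n-1). *)
Definition vec (n : nat) := {x : nat -> R | forall j, (n <= j)%nat -> x j = 0}.
Definition vv {n} (x : vec n) : nat -> R := proj1_sig x.
Coercion vv : vec >-> Funclass.

Definition enorm {n} (x y : vec n) : R :=
  sqrt (rsum n (fun j => (x j - y j) ^ 2)).

Inductive pexp := PFin (p : R) | PInf.
Definition valid_p (p : pexp) : Prop :=
  match p with PFin r => 1 <= r | PInf => True end.

Definition rpow (a b : R) : R :=
  if Rle_dec a 0 then 0 else Rpower a b.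

(** Partition J = {J_1,..,J_m} of {1..n} given by a group map:
    index j < n belongs to block J_(grp j + 1); every block nonempty. *)
Definition is_partition (n m : nat) (grp : nat -> nat) : Prop :=
  (forall j, (j < n)%nat -> (grp j < m)%nat) /\
  (forall i, (i < m)%nat -> exists j, (j < n)%nat /\ grp j = i).

Definition in_group (grp : nat -> nat) (i j : nat) : bool := Nat.eqb (grp j) i.

Definition gnorm (p : pexp) (n : nat) (grp : nat -> nat) (x : nat -> R) (i : nat) : R :=
  match p with
  | PFin r =>
      rpow (rsum n (fun j => if in_group grp i j then rpow (Rabs (x j)) r else 0)) (1 / r)
  | PInf =>
      fold_right (fun j acc => if in_group grp i j then Rmax (Rabs (x j)) acc else acc)
                 0 (seq 0 n)
  end.

Definition card_group (n : nat) (grp : nat -> nat) (i : nat) : nat :=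
  length (filter (in_group grp i) (seq 0 n)).

Definition G0 (p : pexp) (n m : nat) (grp : nat -> nat) (x : nat -> R) : R :=
  INR (length (filter (fun i => if Req_EM_T (gnorm p n grp x i) 0 then false else true)
                      (seq 0 m))).

Definition inner_ew (p : pexp) (n m : nat) (grp : nat -> nat) (x : nat -> R) (w : nat -> R) : R :=
  rsum m (fun i => (1 - w i) * gnorm p n grp x i).

Definition beta_exp (p : pexp) : R :=
  match p with PFin r => (r - 2) / (2 * r) | PInf => 1 / 2 end.
Definition beta (p : pexp) (n m : nat) (grp : nat -> nat) : R :=
  fold_right (fun i acc => Rmax (Rpower (INR (card_group n grp i)) (beta_exp p)) acc)
             1 (seq 0 m).

Definition lsc_R (h : R -> ER) : Prop :=
  forall t c, egt (h t) c ->
    exists delta, 0 < delta /\ forall s, Rabs (s - t) < delta -> egt (h s) c.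

Definition in_Phi (phi : R -> ER) (tstar : R) : Prop :=
  (exists t, phi t <> None) /\
  lsc_R phi /\
  (forall t, 0 <= t <= 1 -> exists delta, 0 < delta /\
      forall s, Rabs (s - t) < delta -> phi s <> None) /\
  (forall a b l, 0 <= a <= 1 -> 0 <= b <= 1 -> 0 <= l <= 1 ->
      rpart (phi (l * a + (1 - l) * b))
        <= l * rpart (phi a) + (1 - l) * rpart (phi b)) /\
  0 <= tstar < 1 /\ phi tstar = Some 0 /\
  (forall t, 0 <= t <= 1 -> ege (phi t) 0) /\
  phi 1 = Some 1.

Definition left_deriv_at1 (phi : R -> ER) (d : R) : Prop :=
  forall eps, 0 < eps -> exists delta, 0 < delta /\
    forall t, 1 - delta < t < 1 ->
      Rabs ((rpart (phi 1) - rpart (phi t)) / (1 - t) - d) < eps.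

Definition psi (phi : R -> ER) (t : R) : ER :=
  if Rle_dec 0 t then (if Rle_dec t 1 then phi t else None) else None.

Definition in_subdiff (h : R -> ER) (t0 g : R) : Prop :=
  h t0 <> None /\
  forall t, ege (h t) (rpart (h t0) + g * (t - t0)).

Definition proper_f {n} (f : vec n -> ER) : Prop := exists x, f x <> None.
Definition lsc_f {n} (f : vec n -> ER) : Prop :=
  forall x c, egt (f x) c ->
    exists delta, 0 < delta /\ forall y, enorm y x < delta -> egt (f y) c.
Definition closed_vset {n} (Om : vec n -> Prop) : Prop :=
  forall x, ~ Om x -> exists delta, 0 < delta /\ forall y, enorm y x < delta -> ~ Om y.
Definition lipschitz_rel {n} (f : vec n -> ER) (Om : vec n -> Prop) (L : R) : Prop :=
  forall x y, Om x -> Om y -> exists fx fy, f x = Some fx /\ f y = Some fy /\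
    Rabs (fx - fy) <= L * enorm x y.

Definition xrho_fun (p : pexp) (n : nat) (grp : nat -> nat) (d rho : R) (x : nat -> R) (j : nat) : R :=
  if Rle_dec (rho * gnorm p n grp x (grp j)) d then 0 else x j.

Lemma xrho_vec (p : pexp) (n : nat) (grp : nat -> nat) (d rho : R) (x : vec n) :
  forall j, (n <= j)%nat -> xrho_fun p n grp d rho x j = 0.
Proof.
  intros j Hj. unfold xrho_fun. destruct (Rle_dec _ _); [reflexivity|].
  destruct x as [x Hx]. simpl. apply Hx; exact Hj.
Qed.

Definition xrho (p : pexp) (n : nat) (grp : nat -> nat) (d rho : R) (x : vec n) : vec n :=
  exist _ (xrho_fun p n grp d rho x) (xrho_vec p n grp d rho x).

Definition obj0 {n} (p : pexp) (m : nat) (grp : nat -> nat) (nu : R) (f : vec n -> ER) (x : vec n) : ER :=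
  eadd (escal nu (f x)) (Some (G0 p n m grp x)).
Definition objQ {n} (m : nat) (phi : R -> ER) (nu : R) (f : vec n -> ER) (x : vec n) (w : nat -> R) : ER :=
  eadd (escal nu (f x)) (esum m (fun i => phi (w i))).
Definition objPen {n} (p : pexp) (m : nat) (grp : nat -> nat) (phi : R -> ER) (nu : R)
    (f : vec n -> ER) (rho : R) (x : vec n) (w : nat -> R) : ER :=
  eadd (objQ m phi nu f x w) (Some (rho * inner_ew p n m grp x w)).

Definition box (m : nat) (w : nat -> R) : Prop := forall i, (i < m)%nat -> 0 <= w i <= 1.

Definition optval_attained {A} (F : A -> Prop) (obj : A -> ER) (v : R) : Prop :=
  (exists z, F z /\ obj z = Some v) /\ (forall z, F z -> ege (obj z) v).
Definition optval {A} (F : A -> Prop) (obj : A -> ER) (v : R) : Prop :=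
  (forall z, F z -> ege (obj z) v) /\
  (forall eps, 0 < eps -> exists z r, F z /\ obj z = Some r /\ r < v + eps).
Definition gopt {A} (F : A -> Prop) (obj : A -> ER) (z : A) : Prop :=
  F z /\ forall z', F z' -> ele (obj z) (obj z').

(* Main.v *)
Require Import Defs.
From Stdlib Require Import Reals Lra List Lia Psatz.
Import ListNotations.
Open Scope R_scope.

Definition sumL (l : list nat) (F : nat -> R) : R :=
  fold_right (fun i acc => F i + acc) 0 l.

Lemma rsum_sumL k F : rsum k F = sumL (seq 0 k) F.
Proof. reflexivity. Qed.

Lemma sumL_le l F G : (forall j, In j l -> F j <= G j) -> sumL l F <= sumL l G.
Proof.
  induction l as [|a l IH]; simpl; intros H; [lra|].
  assert (F a <= G a) by (apply H; auto).
  assert (sumL l F <= sumL l G) by (apply IH; intros; apply H; auto). lra.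
Qed.

Lemma sumL_ext l F G : (forall j, In j l -> F j = G j) -> sumL l F = sumL l G.
Proof.
  induction l as [|a l IH]; simpl; intros H; [lra|].
  rewrite (H a) by auto. rewrite IH; auto.
Qed.

Lemma sumL_plus l F G : sumL l (fun j => F j + G j) = sumL l F + sumL l G.
Proof. induction l; simpl; [lra|]. rewrite IHl. lra. Qed.

Lemma sumL_scal l c F : sumL l (fun j => c * F j) = c * sumL l F.
Proof. induction l; simpl; [lra|]. rewrite IHl. lra. Qed.

Lemma sumL_const l c : sumL l (fun _ => c) = c * INR (length l).
Proof. induction l; simpl length; [simpl; lra|]. rewrite S_INR. simpl. rewrite IHl. lra. Qed.

Lemma sumL_nonneg l F : (forall j, In j l -> 0 <= F j) -> 0 <= sumL l F.
Proof.
  intros H. replace 0 with (sumL l (fun _ => 0)).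
  - apply sumL_le. auto.
  - rewrite sumL_const. lra.
Qed.

Lemma sumL_zero l F : (forall j, In j l -> F j = 0) -> sumL l F = 0.
Proof. intros H. rewrite (sumL_ext l F (fun _ => 0)) by auto. rewrite sumL_const. lra. Qed.

Lemma sumL_term l F j : (forall j, In j l -> 0 <= F j) -> In j l -> F j <= sumL l F.
Proof.
  induction l as [|a l IH]; simpl; intros H Hj; [tauto|].
  destruct Hj as [<-|Hj].
  - assert (0 <= sumL l F) by (apply sumL_nonneg; auto). lra.
  - assert (0 <= F a) by auto. assert (F j <= sumL l F) by (apply IH; auto). lra.
Qed.

Lemma sumL_filter l (P : nat -> bool) F :
  sumL l (fun j => if P j then F j else 0) = sumL (filter P l) F.
Proof. induction l; simpl; [lra|]. destruct (P a); simpl; rewrite IHl; lra. Qed.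

Lemma INR_length_filter l (P : nat -> bool) :
  INR (length (filter P l)) = sumL l (fun j => if P j then 1 else 0).
Proof.
  induction l; simpl; [lra|]. destruct (P a); simpl length; try rewrite S_INR; rewrite IHl; lra.
Qed.

Lemma filter_eqb_none k m s : (k < s)%nat -> filter (Nat.eqb k) (seq s m) = [].
Proof.
  revert s. induction m; intros s Hs; simpl; auto.
  destruct (Nat.eqb_spec k s); [lia|]. apply IHm. lia.
Qed.

Lemma filter_eqb_one k m s : (s <= k)%nat -> (k < s + m)%nat -> filter (Nat.eqb k) (seq s m) = [k].
Proof.
  revert s. induction m as [|m IH]; intros s H1 H2; [lia|].
  simpl. destruct (Nat.eqb_spec k s).
  - subst. f_equal. apply filter_eqb_none. lia.
  - apply IH; lia.
Qed.

Lemma sumL_delta m k c : (k < m)%nat ->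
  sumL (seq 0 m) (fun i => if Nat.eqb k i then c else 0) = c.
Proof.
  intros Hk. rewrite sumL_filter. rewrite filter_eqb_one by lia. simpl. lra.
Qed.

Lemma sumL_regroup l m (grp : nat -> nat) F :
  (forall j, In j l -> (grp j < m)%nat) ->
  sumL l F = sumL (seq 0 m) (fun i => sumL l (fun j => if in_group grp i j then F j else 0)).
Proof.
  induction l as [|a l IH]; simpl; intros H.
  - rewrite sumL_zero; auto.
  - rewrite IH by auto.
    rewrite <- (sumL_delta m (grp a) (F a)) at 1 by auto.
    rewrite <- sumL_plus. apply sumL_ext. intros i _. unfold in_group.
    destruct (Nat.eqb (grp a) i); lra.
Qed.

Lemma Rpower_pos a b : 0 < Rpower a b.
Proof. unfold Rpower. apply exp_pos. Qed.

Lemma rpow_nonneg a b : 0 <= rpow a b.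
Proof. unfold rpow. destruct (Rle_dec a 0); [lra|]. left; apply Rpower_pos. Qed.

Lemma rpow_pos_eq a b : 0 < a -> rpow a b = Rpower a b.
Proof. intros H. unfold rpow. destruct (Rle_dec a 0); [lra|auto]. Qed.

Lemma rpow_le0 a b : a <= 0 -> rpow a b = 0.
Proof. intros H. unfold rpow. destruct (Rle_dec a 0); [auto|lra]. Qed.

Lemma rpow_eq0 a b : 0 <= a -> rpow a b = 0 -> a = 0.
Proof.
  intros H1 H2. destruct (Req_dec a 0); auto.
  rewrite rpow_pos_eq in H2 by lra. pose proof (Rpower_pos a b). lra.
Qed.

Lemma concave_pow y s : 0 <= y -> 0 < s <= 1 -> rpow y s <= s * y + 1 - s.
Proof.
  intros Hy Hs. destruct (Req_dec y 0) as [->|Hy0].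
  - rewrite rpow_le0 by lra. lra.
  - rewrite rpow_pos_eq by lra. unfold Rpower.
    set (L := ln y). set (E := exp (s * L)).
    assert (HE : 0 < E) by apply exp_pos.
    assert (Hy' : exp L = y) by (apply exp_ln; lra).
    assert (H1 : exp L = E * exp ((1 - s) * L)).
    { unfold E. rewrite <- exp_plus. f_equal. ring. }
    assert (H2 : 1 = E * exp (- (s * L))).
    { unfold E. rewrite <- exp_plus. replace (s * L + - (s * L)) with 0 by ring. rewrite exp_0. ring. }
    pose proof (exp_ineq1_le ((1 - s) * L)).
    pose proof (exp_ineq1_le (- (s * L))).
    assert (E * (1 + (1 - s) * L) <= exp L) by (rewrite H1; apply Rmult_le_compat_l; lra).
    assert (E * (1 + - (s * L)) <= 1) by (rewrite H2 at 2; apply Rmult_le_compat_l; lra).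
    rewrite <- Hy'. nra.
Qed.

Lemma Rpower_two a : 0 < a -> Rpower a 2 = a ^ 2.
Proof. intros H. rewrite <- Rpower_pow by auto. f_equal. Qed.

Lemma sumT_zero l a r : (forall j, 0 <= a j) ->
  sumL l (fun j => rpow (a j) r) <= 0 -> sumL l (fun j => a j ^ 2) = 0.
Proof.
  intros Ha HT. apply sumL_zero. intros j Hj.
  assert (rpow (a j) r <= sumL l (fun j => rpow (a j) r)).
  { apply (sumL_term l (fun j => rpow (a j) r)); auto. intros; apply rpow_nonneg. }
  pose proof (rpow_nonneg (a j) r).
  assert (a j = 0) by (apply (rpow_eq0 _ r); auto; lra). rewrite H1. ring.
Qed.

Lemma Rpower_inv_r T r : 0 < T -> 0 < r -> Rpower (Rpower T (1 / r)) r = T.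
Proof.
  intros HT Hr. rewrite Rpower_mult. replace (1 / r * r) with 1 by (field; lra).
  apply Rpower_1; auto.
Qed.

Lemma norm_le2 l a r : 1 <= r <= 2 -> (forall j, 0 <= a j) ->
  sumL l (fun j => a j ^ 2) <= (rpow (sumL l (fun j => rpow (a j) r)) (1 / r)) ^ 2.
Proof.
  intros Hr Ha. set (T := sumL l (fun j => rpow (a j) r)).
  destruct (Rle_dec T 0) as [HT|HT].
  - rewrite sumT_zero with (r := r) by auto. apply pow2_ge_0.
  - apply Rnot_le_lt in HT. rewrite rpow_pos_eq by auto.
    set (g := Rpower T (1 / r)).
    assert (Hg : 0 < g) by apply Rpower_pos.
    assert (HgT : Rpower g r = T) by (apply Rpower_inv_r; lra).
    apply Rle_trans with (sumL l (fun j => Rpower g (2 - r) * rpow (a j) r)).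
    + apply sumL_le. intros j Hj. destruct (Req_dec (a j) 0) as [E|E].
      * rewrite E, rpow_le0 by lra. simpl. lra.
      * assert (Haj : 0 < a j) by (specialize (Ha j); lra).
        rewrite rpow_pos_eq by auto.
        assert (Hle : a j <= g).
        { destruct (Rle_dec (a j) g); auto. exfalso.
          assert (Rpower g r < Rpower (a j) r) by (apply Rlt_Rpower_l; lra).
          assert (rpow (a j) r <= T).
          { apply (sumL_term l (fun j => rpow (a j) r)); auto. intros; apply rpow_nonneg. }
          rewrite rpow_pos_eq in H0 by auto. lra. }
        rewrite <- Rpower_two by auto.
        replace 2 with (r + (2 - r)) at 1 by ring. rewrite Rpower_plus.
        rewrite (Rmult_comm (Rpower g (2 - r))).
        apply Rmult_le_compat_l; [left; apply Rpower_pos|].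
        apply Rle_Rpower_l; lra.
    + rewrite sumL_scal. fold T. rewrite <- HgT, <- Rpower_plus.
      replace (2 - r + r) with 2 by ring. rewrite Rpower_two; lra.
Qed.

Lemma norm_ge2 l a r : 2 <= r -> l <> [] -> (forall j, 0 <= a j) ->
  sumL l (fun j => a j ^ 2) <=
  Rpower (INR (length l)) ((r - 2) / r) * (rpow (sumL l (fun j => rpow (a j) r)) (1 / r)) ^ 2.
Proof.
  intros Hr Hl Ha. set (T := sumL l (fun j => rpow (a j) r)).
  assert (Hk : 0 < INR (length l)).
  { destruct l; [congruence|]. simpl length. rewrite S_INR. pose proof (pos_INR (length l)). lra. }
  set (k := INR (length l)) in *.
  destruct (Rle_dec T 0) as [HT|HT].
  - rewrite sumT_zero with (r := r) by auto. apply Rmult_le_pos; [left; apply Rpower_pos|apply pow2_ge_0].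
  - apply Rnot_le_lt in HT. rewrite rpow_pos_eq by auto.
    set (s := 2 / r). set (M := T / k).
    assert (HM : 0 < M) by (unfold M; apply Rdiv_lt_0_compat; auto).
    assert (Hs : 0 < s <= 1) by (unfold s; split; [apply Rdiv_lt_0_compat; lra|];
       apply (Rmult_le_reg_r r); [lra|]; unfold Rdiv; rewrite Rmult_assoc, Rinv_l; lra).
    apply Rle_trans with (sumL l (fun j => Rpower M s * (s * (rpow (a j) r / M) + 1 - s))).
    + apply sumL_le. intros j Hj.
      pose proof (concave_pow (rpow (a j) r / M) s) as Hc.
      assert (0 <= rpow (a j) r / M) by (apply Rmult_le_pos; [apply rpow_nonneg|left; apply Rinv_0_lt_compat; auto]).
      specialize (Hc H Hs).
      destruct (Req_dec (a j) 0) as [E|E].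
      * rewrite E, rpow_le0 by lra.
        replace (0 ^ 2) with 0 by ring. unfold Rdiv. rewrite Rmult_0_l.
        apply Rmult_le_pos; [left; apply Rpower_pos|]. lra.
      * assert (Haj : 0 < a j) by (specialize (Ha j); lra).
        rewrite (rpow_pos_eq (a j)) in * by auto.
        rewrite rpow_pos_eq in Hc by (apply Rdiv_lt_0_compat; auto; apply Rpower_pos).
        assert (Hid : Rpower M s * Rpower (Rpower (a j) r / M) s = a j ^ 2).
        { rewrite Rpower_mult_distr by (auto; apply Rdiv_lt_0_compat; auto; apply Rpower_pos).
          replace (M * (Rpower (a j) r / M)) with (Rpower (a j) r) by (field; lra).
          rewrite Rpower_mult. unfold s. replace (r * (2 / r)) with 2 by (field; lra).
          apply Rpower_two; auto. }
        rewrite <- Hid. apply Rmult_le_compat_l; [left; apply Rpower_pos|auto].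
    + rewrite sumL_scal.
      rewrite (sumL_ext l _ (fun j => s / M * rpow (a j) r + (1 - s))) by (intros; unfold Rdiv; ring).
      rewrite sumL_plus, sumL_scal, sumL_const. fold T. fold k.
      replace (s / M * T + (1 - s) * k) with k by (unfold M; field; lra).
      (* k * M^s = k^(1-s) * T^s *)
      rewrite <- Rpower_two by apply Rpower_pos.
      rewrite Rpower_mult. replace (1 / r * 2) with s by (unfold s; field; lra).
      replace ((r - 2) / r) with (1 - s) by (unfold s; field; lra).
      assert (Hinv : Rpower k s * Rpower (/ k) s = 1).
      { rewrite Rpower_mult_distr by (auto; apply Rinv_0_lt_compat; auto).
        rewrite Rinv_r by lra. unfold Rpower. rewrite ln_1, Rmult_0_r. apply exp_0. }
      assert (HMs : Rpower M s = Rpower T s * Rpower (/ k) s).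
      { unfold M, Rdiv. rewrite Rpower_mult_distr; auto. apply Rinv_0_lt_compat; auto. }
      assert (Hk1 : Rpower k (1 - s) * Rpower k s = k).
      { rewrite <- Rpower_plus. replace (1 - s + s) with 1 by ring. apply Rpower_1; auto. }
      rewrite HMs. right.
      set (A := Rpower k (1 - s)) in *. set (B := Rpower k s) in *. set (C := Rpower (/ k) s) in *.
      set (TS := Rpower T s). clearbody A B C. rewrite <- Hk1.
      replace (TS * C * (A * B)) with (A * TS * (B * C)) by ring. rewrite Hinv. ring.
Qed.

Definition fmax (l : list nat) (a : nat -> R) : R :=
  fold_right (fun j acc => Rmax (a j) acc) 0 l.

Lemma fmax_filter l (P : nat -> bool) a :
  fold_right (fun j acc => if P j then Rmax (a j) acc else acc) 0 l = fmax (filter P l) a.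
Proof. induction l; simpl; auto. destruct (P a0); simpl; rewrite IHl; auto. Qed.

Lemma fmax_nonneg l a : 0 <= fmax l a.
Proof. induction l; simpl; [lra|]. eapply Rle_trans; [apply IHl|apply Rmax_r]. Qed.

Lemma fmax_ge l a j : In j l -> a j <= fmax l a.
Proof.
  induction l; simpl; [tauto|]. intros [<-|H]; [apply Rmax_l|].
  eapply Rle_trans; [apply IHl; auto|apply Rmax_r].
Qed.

Lemma gnorm_nonneg p n grp x i : 0 <= gnorm p n grp x i.
Proof.
  destruct p; simpl; [apply rpow_nonneg|]. rewrite fmax_filter. apply fmax_nonneg.
Qed.

Lemma sqrt_le_mul S b g : 0 <= b -> 0 <= g -> S <= (b * g) ^ 2 -> sqrt S <= b * g.
Proof.
  intros Hb Hg H. rewrite <- (sqrt_pow2 (b * g)) by (apply Rmult_le_pos; auto).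
  apply sqrt_le_1_alt. auto.
Qed.

Lemma group_l2 p n grp x i b :
  valid_p p -> (1 <= card_group n grp i)%nat -> 1 <= b ->
  Rpower (INR (card_group n grp i)) (beta_exp p) <= b ->
  sqrt (rsum n (fun j => if in_group grp i j then x j ^ 2 else 0)) <= b * gnorm p n grp x i.
Proof.
  intros Hp Hc Hb Hbe.
  set (l := filter (in_group grp i) (seq 0 n)).
  assert (Hl : l <> []) by (intro E; unfold card_group in Hc; fold l in Hc; rewrite E in Hc; simpl in Hc; lia).
  assert (Hk : 1 <= INR (length l)) by (apply (le_INR 1); auto).
  unfold card_group in Hbe; fold l in Hbe.
  rewrite rsum_sumL, sumL_filter. fold l.
  rewrite (sumL_ext l _ (fun j => Rabs (x j) ^ 2)) by (intros; rewrite <- pow2_abs; auto).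
  pose proof (gnorm_nonneg p n grp x i) as Hg0.
  apply sqrt_le_mul; [lra|auto|].
  destruct p as [r|]; simpl in Hp, Hbe |- *.
  - rewrite rsum_sumL, sumL_filter. fold l.
    simpl in Hg0. rewrite rsum_sumL, sumL_filter in Hg0. fold l in Hg0.
    set (g := rpow (sumL l (fun j => rpow (Rabs (x j)) r)) (1 / r)) in *.
    destruct (Rle_dec r 2).
    + eapply Rle_trans; [apply (norm_le2 l (fun j => Rabs (x j)) r); [split; lra|intros; apply Rabs_pos]|]. fold g. clearbody g.
      assert (g <= b * g) by (rewrite <- (Rmult_1_l g) at 1; apply Rmult_le_compat_r; lra).
      replace (b * g * (b * g * 1)) with ((b * g) ^ 2) by ring. apply pow_incr; lra.
    + eapply Rle_trans; [apply (norm_ge2 l (fun j => Rabs (x j)) r); [lra|auto|intros; apply Rabs_pos]|]. fold g.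
      replace ((r - 2) / r) with ((r - 2) / (2 * r) + (r - 2) / (2 * r)) by (field; lra).
      rewrite Rpower_plus. pose proof (Rpower_pos (INR (length l)) ((r - 2) / (2 * r))).
      set (q := Rpower (INR (length l)) ((r - 2) / (2 * r))) in *.
      clearbody g q.
      assert (q * q <= b * b) by nra. assert (0 <= g * g) by nra.
      replace (b * g * (b * g * 1)) with (b * b * (g * g)) by ring.
      replace (g ^ 2) with (g * g) by ring.
      apply Rmult_le_compat_r; auto.
  - rewrite fmax_filter. fold l. simpl in Hg0; rewrite fmax_filter in Hg0. fold l in Hg0.
    set (M := fmax l (fun j => Rabs (x j))) in *.
    apply Rle_trans with (sumL l (fun _ => M ^ 2)).
    + apply sumL_le. intros j Hj. pose proof (fmax_ge l (fun j => Rabs (x j)) j Hj).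
      simpl in H. fold M in H. pose proof (Rabs_pos (x j)). nra.
    + rewrite sumL_const.
      replace (1 / 2) with (/ 2) in Hbe by field.
      rewrite Rpower_sqrt in Hbe by lra.
      pose proof (sqrt_pos (INR (length l))).
      assert (INR (length l) = sqrt (INR (length l)) ^ 2) by (rewrite pow2_sqrt; lra).
      rewrite H0. clearbody M. set (sq := sqrt (INR (length l))) in *. clearbody sq.
      replace (M ^ 2 * sq ^ 2) with ((sq * M) ^ 2) by ring.
      replace (b * M * (b * M * 1)) with ((b * M) ^ 2) by ring.
      apply pow_incr. split; [apply Rmult_le_pos; lra|]. apply Rmult_le_compat_r; lra.
Qed.

Lemma pen_group P w g rb d ts t0 :
  0 <= P -> 1 - d * (1 - w) <= P -> (w - t0) / (1 - ts) <= P ->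
  0 <= w <= 1 -> 0 <= g -> 0 < rb -> 1 <= d * (1 - ts) -> 0 <= ts < 1 -> 0 <= t0 < 1 ->
  (if Rle_dec (rb * g) d then (1 - t0) / (d * (1 - ts)) * rb * g else 1) <= P + rb * (1 - w) * g.
Proof.
  intros H0 H1 H2 Hw Hg Hrb Hd Hts Ht0.
  assert (Hts' : 0 < 1 - ts) by lra.
  assert (Hdp : 0 < d) by (destruct (Rle_lt_dec d 0); [nra|auto]).
  destruct (Rle_dec (rb * g) d) as [Hle|Hgt].
  - set (G := rb * g) in *. assert (HG : 0 <= G) by (unfold G; apply Rmult_le_pos; lra).
    replace ((1 - t0) / (d * (1 - ts)) * rb * g) with ((1 - t0) * (G / (d * (1 - ts)))) by (unfold G; field; lra).
    replace (rb * (1 - w) * g) with ((1 - w) * G) by (unfold G; ring).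
    set (tau := G / (d * (1 - ts))).
    assert (Htau1 : tau <= G).
    { unfold tau. apply (Rmult_le_reg_r (d * (1 - ts))); [nra|].
      unfold Rdiv. rewrite Rmult_assoc, Rinv_l by nra. nra. }
    assert (Htau2 : tau * (1 - ts) <= 1).
    { unfold tau. unfold Rdiv. replace (G * / (d * (1 - ts)) * (1 - ts)) with (G / d) by (field; lra).
      apply (Rmult_le_reg_r d); [lra|]. unfold Rdiv. rewrite Rmult_assoc, Rinv_l by lra. lra. }
    assert (Htau0 : 0 <= tau) by (unfold tau; apply Rmult_le_pos; [lra|left; apply Rinv_0_lt_compat; nra]).
    clearbody tau G.
    destruct (Rle_lt_dec t0 w).
    + assert (HP : (w - t0) <= P * (1 - ts)).
      { apply (Rmult_le_compat_r (1 - ts)) in H2; [|lra].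
        unfold Rdiv in H2. rewrite Rmult_assoc, Rinv_l in H2 by lra. lra. }
      (* (1-t0) tau <= P + (1-w) G; with (w - t0) tau <= (w-t0)/(1-ts) <= P *)
      assert ((w - t0) * tau <= P).
      { apply Rle_trans with ((w - t0) / (1 - ts)); auto.
        apply (Rmult_le_reg_r (1 - ts)); [lra|].
        replace ((w - t0) / (1 - ts) * (1 - ts)) with ((w - t0) * 1) by (field; lra).
        rewrite Rmult_assoc. apply Rmult_le_compat_l; lra. }
      nra.
    + nra.
  - assert (d < rb * g) by lra. nra.
Qed.

Lemma phi_fin phi ts t : in_Phi phi ts -> 0 <= t <= 1 -> phi t = Some (rpart (phi t)).
Proof.
  intros (_ & _ & Hint & _) Ht. destruct (Hint t Ht) as (dl & Hdl & H).
  specialize (H t). rewrite Rminus_diag, Rabs_R0 in H. specialize (H Hdl).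
  destruct (phi t); simpl; congruence.
Qed.

Lemma Pf_nonneg phi ts t : in_Phi phi ts -> 0 <= t <= 1 -> 0 <= rpart (phi t).
Proof.
  intros Hphi Ht. pose proof (phi_fin _ _ _ Hphi Ht) as E.
  destruct Hphi as (_ & _ & _ & _ & _ & _ & Hmin & _). specialize (Hmin t Ht).
  rewrite E in Hmin. exact Hmin.
Qed.

Lemma Pf_mono phi ts t s : in_Phi phi ts -> 0 <= t -> t < s -> s < 1 ->
  (1 - s) * (1 - rpart (phi t)) <= (1 - t) * (1 - rpart (phi s)).
Proof.
  intros Hphi Ht Hts Hs.
  destruct Hphi as (_ & _ & _ & Hconv & _ & _ & _ & H1).
  set (l := (1 - s) / (1 - t)).
  assert (Hl : 0 <= l <= 1).
  { unfold l. split.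
    - apply Rmult_le_pos; [lra|left; apply Rinv_0_lt_compat; lra].
    - apply (Rmult_le_reg_r (1 - t)); [lra|]. unfold Rdiv. rewrite Rmult_assoc, Rinv_l; lra. }
  specialize (Hconv t 1 l ltac:(lra) ltac:(lra) Hl).
  replace (l * t + (1 - l) * 1) with s in Hconv by (unfold l; field; lra).
  rewrite H1 in Hconv. simpl in Hconv.
  assert (l * (1 - t) = 1 - s) by (unfold l; field; lra).
  nra.
Qed.

Lemma Pf_tangent phi ts d t : in_Phi phi ts -> left_deriv_at1 phi d -> 0 <= t <= 1 ->
  1 - d * (1 - t) <= rpart (phi t).
Proof.
  intros Hphi Hd Ht.
  pose proof Hphi as (_ & _ & _ & _ & _ & _ & _ & H1).
  destruct (Req_dec t 1) as [->|Ht1].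
  - rewrite H1. simpl. lra.
  - assert (Htl : t < 1) by lra.
    destruct (Rle_lt_dec (1 - d * (1 - t)) (rpart (phi t))) as [ok|bad]; auto.
    exfalso. set (q := (1 - rpart (phi t)) / (1 - t)).
    assert (Hq : d < q).
    { unfold q. apply (Rmult_lt_reg_r (1 - t)); [lra|].
      replace ((1 - rpart (phi t)) / (1 - t) * (1 - t)) with (1 - rpart (phi t)) by (field; lra). lra. }
    destruct (Hd (q - d) ltac:(lra)) as (dl & Hdl & H).
    set (s := (Rmax t (1 - dl) + 1) / 2).
    assert (Hs1 : t < s) by (unfold s; pose proof (Rmax_l t (1 - dl)); lra).
    assert (Hs2 : 1 - dl < s) by (unfold s; pose proof (Rmax_r t (1 - dl)); pose proof (Rmax_lub_lt t (1-dl) 1 Htl ltac:(lra)); lra).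
    assert (Hs3 : s < 1) by (unfold s; pose proof (Rmax_lub_lt t (1-dl) 1 Htl ltac:(lra)); lra).
    specialize (H s ltac:(lra)). rewrite H1 in H. simpl in H.
    pose proof (Pf_mono phi ts t s Hphi ltac:(lra) Hs1 Hs3) as Hm.
    assert (q <= (1 - rpart (phi s)) / (1 - s)).
    { unfold q. apply (Rmult_le_reg_r ((1 - t) * (1 - s))); [nra|].
      replace ((1 - rpart (phi t)) / (1 - t) * ((1 - t) * (1 - s))) with ((1 - s) * (1 - rpart (phi t))) by (field; lra).
      replace ((1 - rpart (phi s)) / (1 - s) * ((1 - t) * (1 - s))) with ((1 - t) * (1 - rpart (phi s))) by (field; lra).
      auto. }
    apply Rabs_def2 in H. lra.
Qed.

Lemma fmax_zero l a : (forall j, In j l -> a j = 0) -> fmax l a = 0.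
Proof.
  induction l; simpl; intros H; auto. rewrite IHl by auto. rewrite H by auto.
  apply Rmax_left; lra.
Qed.

Lemma gnorm_zero p n grp (y : nat -> R) i :
  (forall j, grp j = i -> y j = 0) -> gnorm p n grp y i = 0.
Proof.
  intros H. destruct p as [r|]; simpl.
  - rewrite rpow_le0; auto. rewrite rsum_sumL, sumL_zero; [lra|].
    intros j _. unfold in_group. destruct (Nat.eqb_spec (grp j) i); auto.
    rewrite H by auto. rewrite Rabs_R0. apply rpow_le0; lra.
  - rewrite fmax_filter. apply fmax_zero. intros j Hj.
    apply filter_In in Hj. destruct Hj as [_ Hj]. unfold in_group in Hj.
    apply Nat.eqb_eq in Hj. rewrite H; auto. apply Rabs_R0.
Qed.

Definition fmaxc (c : R) (l : list nat) (a : nat -> R) : R :=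
  fold_right (fun j acc => Rmax (a j) acc) c l.

Lemma fmaxc_ge_c c l a : c <= fmaxc c l a.
Proof. induction l; simpl; [lra|]. eapply Rle_trans; [apply IHl|apply Rmax_r]. Qed.

Lemma fmaxc_ge c l a j : In j l -> a j <= fmaxc c l a.
Proof.
  induction l; simpl; [tauto|]. intros [<-|H]; [apply Rmax_l|].
  eapply Rle_trans; [apply IHl; auto|apply Rmax_r].
Qed.

Lemma esum_fin m (F : nat -> ER) (P : nat -> R) :
  (forall i, (i < m)%nat -> F i = Some (P i)) -> esum m F = Some (rsum m P).
Proof.
  intros H. unfold esum, rsum.
  assert (forall l, (forall i, In i l -> F i = Some (P i)) ->
    fold_right (fun i acc => eadd (F i) acc) (Some 0) l = Some (fold_right (fun i acc => P i + acc) 0 l)).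
  { induction l; simpl; intros; auto. rewrite H0 by auto. rewrite IHl by auto. reflexivity. }
  apply H0. intros i Hi. apply in_seq in Hi. apply H. lia.
Qed.

Lemma sqrt_sumL l A : (forall j, In j l -> 0 <= A j) ->
  sqrt (sumL l A) <= sumL l (fun j => sqrt (A j)).
Proof.
  induction l as [|a l IH]; simpl; intros H.
  - rewrite sqrt_0. lra.
  - assert (Ha : 0 <= A a) by auto.
    assert (HS : 0 <= sumL l A) by (apply sumL_nonneg; auto).
    assert (IH' : sqrt (sumL l A) <= sumL l (fun j => sqrt (A j))) by (apply IH; auto).
    apply Rle_trans with (sqrt (A a) + sqrt (sumL l A)); [|lra].
    pose proof (sqrt_pos (A a)). pose proof (sqrt_pos (sumL l A)).
    rewrite <- (sqrt_pow2 (sqrt (A a) + sqrt (sumL l A))) by lra.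
    apply sqrt_le_1_alt.
    assert (sqrt (A a) ^ 2 = A a) by (apply pow2_sqrt; auto).
    assert (sqrt (sumL l A) ^ 2 = sumL l A) by (apply pow2_sqrt; auto).
    nra.
Qed.

Lemma inner_nonneg p n m grp x w : box m w -> 0 <= inner_ew p n m grp x w.
Proof.
  intros Hw. unfold inner_ew. rewrite rsum_sumL. apply sumL_nonneg.
  intros i Hi. apply in_seq in Hi. specialize (Hw i ltac:(lia)).
  apply Rmult_le_pos; [lra|apply gnorm_nonneg].
Qed.

Lemma card_pos n m grp i : is_partition n m grp -> (i < m)%nat -> (1 <= card_group n grp i)%nat.
Proof.
  intros [_ H] Hi. destruct (H i Hi) as (j & Hj & E). unfold card_group.
  assert (In j (filter (in_group grp i) (seq 0 n))).
  { apply filter_In. split; [apply in_seq; lia|]. unfold in_group. apply Nat.eqb_eq; auto. }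
  destruct (filter (in_group grp i) (seq 0 n)); simpl in *; [tauto|lia].
Qed.

Lemma enorm_xrho p n m grp d rb (x : vec n) b :
  is_partition n m grp -> valid_p p -> 1 <= b ->
  (forall i, (i < m)%nat -> Rpower (INR (card_group n grp i)) (beta_exp p) <= b) ->
  enorm (xrho p n grp d rb x) x <=
  sumL (seq 0 m) (fun i => if Rle_dec (rb * gnorm p n grp x i) d then b * gnorm p n grp x i else 0).
Proof.
  intros Hpart Hp Hb Hbe. unfold enorm. rewrite rsum_sumL.
  rewrite (sumL_regroup _ m grp).
  2:{ intros j Hj. apply in_seq in Hj. apply (proj1 Hpart). lia. }
  eapply Rle_trans; [apply sqrt_sumL|].
  { intros i _. apply sumL_nonneg. intros j _. destruct (in_group grp i j); [apply pow2_ge_0|lra]. }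
  apply sumL_le. intros i Hi. apply in_seq in Hi.
  destruct (Rle_dec (rb * gnorm p n grp x i) d) as [Hle|Hgt].
  - rewrite (sumL_ext _ _ (fun j => if in_group grp i j then x j ^ 2 else 0)).
    + rewrite <- rsum_sumL. apply group_l2; auto. apply (card_pos n m); auto; lia. apply Hbe. lia.
    + intros j _. unfold in_group. destruct (Nat.eqb_spec (grp j) i); auto.
      simpl. unfold xrho_fun. subst i. destruct (Rle_dec _ _); [|contradiction]. ring.
  - rewrite sumL_zero; [rewrite sqrt_0; lra|].
    intros j _. unfold in_group. destruct (Nat.eqb_spec (grp j) i); auto.
    simpl. unfold xrho_fun. subst i. destruct (Rle_dec _ _); [contradiction|]. ring.
Qed.

Lemma G0_xrho p n m grp d rb (x : vec n) :
  G0 p n m grp (xrho p n grp d rb x) <=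
  sumL (seq 0 m) (fun i => if Rle_dec (rb * gnorm p n grp x i) d then 0 else 1).
Proof.
  unfold G0. rewrite INR_length_filter. apply sumL_le. intros i _.
  destruct (Rle_dec (rb * gnorm p n grp x i) d) as [Hle|Hgt].
  - rewrite gnorm_zero.
    + destruct (Req_EM_T 0 0); [lra|congruence].
    + intros j Hj. simpl. unfold xrho_fun. rewrite Hj. destruct (Rle_dec _ _); [auto|contradiction].
  - destruct (Req_EM_T _ _); lra.
Qed.

Lemma objPen_eq {n} p m grp phi ts nu (f : vec n -> ER) rho x w fx :
  in_Phi phi ts -> f x = Some fx -> box m w ->
  objPen p m grp phi nu f rho x w =
  Some (nu * fx + rsum m (fun i => rpart (phi (w i))) + rho * inner_ew p n m grp x w).
Proof.
  intros Hphi Hf Hw. unfold objPen, objQ. rewrite Hf.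
  rewrite (esum_fin m _ (fun i => rpart (phi (w i)))).
  - reflexivity.
  - intros i Hi. apply (phi_fin phi ts); auto.
Qed.

Lemma objQ_eq {n} m phi ts nu (f : vec n -> ER) x w fx :
  in_Phi phi ts -> f x = Some fx -> box m w ->
  objQ m phi nu f x w = Some (nu * fx + rsum m (fun i => rpart (phi (w i)))).
Proof.
  intros Hphi Hf Hw. unfold objQ. rewrite Hf.
  rewrite (esum_fin m _ (fun i => rpart (phi (w i)))).
  - reflexivity.
  - intros i Hi. apply (phi_fin phi ts); auto.
Qed.

Theorem theorem3p2
  (n m : nat) (grp : nat -> nat) (p : pexp) (phi : R -> ER)
  (tstar t0 d nu Lf varpi : R) (f : vec n -> ER) (Omega : vec n -> Prop)
  (Hpart : is_partition n m grp) (Hp : valid_p p)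
  (Hphi : in_Phi phi tstar) (Hd : left_deriv_at1 phi d)
  (Ht0 : 0 <= t0 < 1) (Ht0sub : in_subdiff (psi phi) t0 (1 / (1 - tstar)))
  (Hnu : 0 < nu) (Hfp : proper_f f) (Hflsc : lsc_f f) (HOm : closed_vset Omega)
  (Hopt : optval_attained Omega (obj0 p m grp nu f) varpi)
  (HLf : 0 < Lf) (Hlip : lipschitz_rel f Omega Lf)
  (Hxrho : forall x rho, Omega x -> 0 < rho -> Omega (xrho p n grp d rho x)) :
  let rbar := d * (1 - tstar) * beta p n m grp * nu * Lf / (1 - t0) in
  let FQ := fun z : vec n * (nat -> R) =>
      Omega (fst z) /\ box m (snd z) /\ inner_ew p n m grp (fst z) (snd z) = 0 in
  let FP := fun z : vec n * (nat -> R) => Omega (fst z) /\ box m (snd z) in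
  ((forall x w, Omega x -> box m w -> ege (objPen p m grp phi nu f rbar x w) varpi) /\
   optval FQ (fun z => objQ m phi nu f (fst z) (snd z)) varpi) /\
  (forall rho, rbar < rho -> forall z,
     gopt FP (fun z => objPen p m grp phi nu f rho (fst z) (snd z)) z <->
     gopt FQ (fun z => objQ m phi nu f (fst z) (snd z)) z).
Proof.
  intros rbar FQ FP.
  pose proof Hphi as (_ & _ & _ & _ & Hts & Hphits & _ & Hphi1).
  assert (Hd1 : 1 <= d * (1 - tstar)).
  { pose proof (Pf_tangent phi tstar d tstar Hphi Hd ltac:(lra)). rewrite Hphits in H. simpl in H. lra. }
  assert (Hdpos : 0 < d) by (destruct (Rle_lt_dec d 0); [nra|auto]).
  set (b := beta p n m grp) in *.
  assert (Hb1 : 1 <= b) by apply fmaxc_ge_c.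
  assert (Hbe : forall i, (i < m)%nat -> Rpower (INR (card_group n grp i)) (beta_exp p) <= b).
  { intros i Hi. apply (fmaxc_ge 1 (seq 0 m) (fun i => Rpower (INR (card_group n grp i)) (beta_exp p)) i).
    apply in_seq. lia. }
  assert (Hrb : 0 < rbar).
  { unfold rbar. apply Rdiv_lt_0_compat; [|lra].
    repeat apply Rmult_lt_0_compat; lra. }
  assert (Hsubw : forall w, 0 <= w <= 1 -> (w - t0) / (1 - tstar) <= rpart (phi w)).
  { intros w Hw. destruct Ht0sub as [_ Hsub]. specialize (Hsub w).
    unfold psi in Hsub. destruct (Rle_dec 0 w); [|lra]. destruct (Rle_dec w 1); [|lra].
    destruct (Rle_dec 0 t0); [|lra]. destruct (Rle_dec t0 1); [|lra].
    pose proof (Pf_nonneg phi tstar t0 Hphi ltac:(lra)).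
    rewrite (phi_fin phi tstar w Hphi Hw) in Hsub. simpl in Hsub.
    replace ((w - t0) / (1 - tstar)) with (1 / (1 - tstar) * (w - t0)) by (field; lra). lra. }
  assert (Key : forall x w, Omega x -> box m w ->
     exists fx, f x = Some fx /\
     varpi <= nu * fx + rsum m (fun i => rpart (phi (w i))) + rbar * inner_ew p n m grp x w).
  { intros x w Hx Hw.
    set (x' := xrho p n grp d rbar x).
    assert (Hx' : Omega x') by (apply Hxrho; auto).
    destruct (Hlip x' x Hx' Hx) as (fx' & fx & Hfx' & Hfx & Hl).
    exists fx. split; auto.
    pose proof (proj2 Hopt x' Hx') as Ho. unfold obj0 in Ho. rewrite Hfx' in Ho. simpl in Ho.
    pose proof (enorm_xrho p n m grp d rbar x b Hpart Hp Hb1 Hbe) as He. fold x' in He.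
    pose proof (G0_xrho p n m grp d rbar x) as HG. fold x' in HG.
    pose proof (Rle_abs (fx' - fx)) as Hab.
    set (g := fun i => gnorm p n grp x i) in *.
    assert (Hsum : nu * Lf * sumL (seq 0 m) (fun i => if Rle_dec (rbar * g i) d then b * g i else 0)
                   + sumL (seq 0 m) (fun i => if Rle_dec (rbar * g i) d then 0 else 1)
                   <= rsum m (fun i => rpart (phi (w i))) + rbar * inner_ew p n m grp x w).
    { unfold inner_ew. rewrite !rsum_sumL, <- sumL_scal, <- sumL_scal, <- !sumL_plus.
      apply sumL_le. intros i Hi. apply in_seq in Hi.
      assert (Hwi : 0 <= w i <= 1) by (apply Hw; lia).
      pose proof (pen_group (rpart (phi (w i))) (w i) (g i) rbar d tstar t0
        (Pf_nonneg phi tstar (w i) Hphi Hwi) (Pf_tangent phi tstar d (w i) Hphi Hd Hwi)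
        (Hsubw (w i) Hwi) Hwi (gnorm_nonneg p n grp x i) Hrb Hd1 Hts Ht0) as Hg.
      assert (Heq : (1 - t0) / (d * (1 - tstar)) * rbar * g i = nu * Lf * (b * g i)).
      { unfold rbar. field. repeat split; lra. }
      replace (rbar * ((1 - w i) * gnorm p n grp x i)) with (rbar * (1 - w i) * g i) by (unfold g; ring).
      destruct (Rle_dec (rbar * g i) d); lra. }
    assert (Hnf : nu * fx' <= nu * (fx + Lf * enorm x' x)) by (apply Rmult_le_compat_l; lra).
    assert (Hnf2 : nu * (Lf * enorm x' x) <= nu * Lf * sumL (seq 0 m) (fun i => if Rle_dec (rbar * g i) d then b * g i else 0)).
    { rewrite <- Rmult_assoc. apply Rmult_le_compat_l; [nra|auto]. }
    assert (nu * (fx + Lf * enorm x' x) = nu * fx + nu * (Lf * enorm x' x)) by ring.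
    change (G0 p n m grp (xrho_fun p n grp d rbar x)) with (G0 p n m grp x') in Ho.
    lra. }
  assert (Part1 : forall x w, Omega x -> box m w -> ege (objPen p m grp phi nu f rbar x w) varpi).
  { intros x w Hx Hw. destruct (Key x w Hx Hw) as (fx & Hfx & Hk).
    rewrite (objPen_eq p m grp phi tstar nu f rbar x w fx Hphi Hfx Hw). exact Hk. }
  destruct (proj1 Hopt) as (xs & Hxs & Hobj).
  destruct (Hlip xs xs Hxs Hxs) as (fxs & _ & Hfxs & _ & _).
  set (ws := fun i => if Req_EM_T (gnorm p n grp xs i) 0 then tstar else 1).
  assert (Hws : box m ws) by (intros i _; unfold ws; destruct (Req_EM_T _ _); lra).
  assert (Hwsi : inner_ew p n m grp xs ws = 0).
  { unfold inner_ew. rewrite rsum_sumL. apply sumL_zero. intros i _. unfold ws.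
    destruct (Req_EM_T _ _) as [E|E]; [rewrite E|]; ring. }
  assert (HQs : objQ m phi nu f xs ws = Some varpi).
  { rewrite (objQ_eq m phi tstar nu f xs ws fxs Hphi Hfxs Hws).
    unfold obj0 in Hobj. rewrite Hfxs in Hobj. simpl in Hobj. rewrite <- Hobj.
    f_equal. f_equal. unfold G0. rewrite INR_length_filter, rsum_sumL.
    apply sumL_ext. intros i _. unfold ws. destruct (Req_EM_T _ _).
    - rewrite Hphits. reflexivity.
    - rewrite Hphi1. reflexivity. }
  assert (HFQs : FQ (xs, ws)) by (split; [|split]; auto).
  assert (LQ : forall z, FQ z -> ege (objQ m phi nu f (fst z) (snd z)) varpi).
  { intros [x w] (Hx & Hw & Hi). simpl in *.
    destruct (Key x w Hx Hw) as (fx & Hfx & Hk).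
    rewrite (objQ_eq m phi tstar nu f x w fx Hphi Hfx Hw). simpl. rewrite Hi in Hk. lra. }
  assert (LP : forall rho, rbar < rho -> forall x w, Omega x -> box m w ->
     exists v I, objPen p m grp phi nu f rho x w = Some (v + rho * I) /\
       objQ m phi nu f x w = Some v /\ inner_ew p n m grp x w = I /\
       varpi + (rho - rbar) * I <= v + rho * I /\ 0 <= I).
  { intros rho Hrho x w Hx Hw. destruct (Key x w Hx Hw) as (fx & Hfx & Hk).
    exists (nu * fx + rsum m (fun i => rpart (phi (w i)))), (inner_ew p n m grp x w).
    split; [apply (objPen_eq p m grp phi tstar nu f rho x w fx Hphi Hfx Hw)|].
    split; [apply (objQ_eq m phi tstar nu f x w fx Hphi Hfx Hw)|].
    split; auto. pose proof (inner_nonneg p n m grp x w Hw). split; [lra|auto]. }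
  split; [split|].
  - exact Part1.
  - split; auto. intros eps Heps. exists (xs, ws), varpi. split; auto. split; auto. lra.
  - intros rho Hrho [x w]. split.
    + intros [[Hx Hw] Hmin]. simpl in *.
      destruct (LP rho Hrho x w Hx Hw) as (v & I & E1 & E2 & E3 & E4 & E5).
      specialize (Hmin (xs, ws) (conj Hxs Hws)). simpl in Hmin.
      rewrite E1, (objPen_eq p m grp phi tstar nu f rho xs ws fxs Hphi Hfxs Hws) in Hmin.
      simpl in Hmin. rewrite Hwsi in Hmin.
      rewrite (objQ_eq m phi tstar nu f xs ws fxs Hphi Hfxs Hws) in HQs. injection HQs as HQs.
      rewrite Rmult_0_r, Rplus_0_r, HQs in Hmin.
      assert (HI : I = 0).
      { destruct E5 as [Ipos|Iz]; auto.
        assert (0 < (rho - rbar) * I) by (apply Rmult_lt_0_compat; lra). lra. }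
      subst I. rewrite HI, Rmult_0_r, Rplus_0_r in Hmin.
      split; [split; [|split]; simpl; auto; lra|].
      intros z' Hz'. simpl. rewrite E2. pose proof (LQ z' Hz').
      destruct (objQ m phi nu f (fst z') (snd z')); simpl in *; auto. lra.
    + intros [(Hx & Hw & Hi) Hmin]. simpl in *.
      specialize (Hmin (xs, ws) HFQs). simpl in Hmin. rewrite HQs in Hmin.
      destruct (LP rho Hrho x w Hx Hw) as (v & I & E1 & E2 & E3 & E4 & E5).
      rewrite E2 in Hmin. simpl in Hmin. subst I.
      split; [split; auto|].
      intros [x' w'] [Hx' Hw']. simpl. rewrite E1.
      destruct (LP rho Hrho x' w' Hx' Hw') as (v' & I' & E1' & _ & _ & E4' & E5').
      rewrite E1'. simpl. rewrite Hi. nra.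
Qed.
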